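(* Consider the dynamic load balancing game described in the context, and suppose all players follow the best-response algorithm. Then after $$t''=O\!\left(\max_j\left\lceil\frac{s_j^0}{\mu_j}\right\rceil\cdot\frac{\sum_j\mu_j+\sum_j s_j^0}{\sum_j\mu_j-\lambda_{\max}}\right)$$ iterations, the state of each server becomes zero (the system becomes load-balanced), and it remains zero thereafter. In particular, the strategies of the players converge to the pure Nash equilibrium of the static load balancing game with zero initial loads, i.e., $\lim_{t\to\infty}a_{ij}^t=\frac{\mu_j}{\sum_{k=1}^m\mu_k}$ for every player $i$ and server $j$.
   Context: Dynamic load balancing game: there are $m$ servers with service rates $\mu_j>0$ and $n$ players with job lengths $\lambda_i>0$; let $\lambda_{\max}=\max_i\lambda_i$, and assume $\lambda_{\max}<\sum_{j=1}^m\mu_j$. Time is discrete, $t=0,1,2,\dots$; the state at time $t$ is $s^t=(s_1^t,\dots,s_m^t)$, $s_j^t\ge0$ the load on server $j$, with given initial state $s^0$. At each time $t$ exactly one player $i$ receives a new job of length $\lambda_i$ and immediately chooses $a_i^t$ in the simplex $\{a:\sum_ja_j=1,a_j\ge0\}$, incurring cost $$D_i(a^t,s^t)=\sum_{j=1}^m\lambda_i a_{ij}^t\left(\frac{\lambda_i a_{ij}^t}{2\mu_j}+\frac{s_j^t}{\mu_j}\right),$$ after which $s_j^{t+1}=\max\{0,\ s_j^t+\lambda_i a_{ij}^t-\mu_j\}$ for all $j$. Best-response algorithm: the player receiving the job at time $t$ chooses $a_i^t$ as the unique minimizer of $D_i(a_i,s^t)$ over the simplex. The static load balancing game with zero initial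 loads is the game in which each player $i$ chooses $a_i$ in the simplex to minimize $\sum_j\lambda_ia_{ij}\big(\frac{\lambda_ia_{ij}}{2\mu_j}+\frac{\sum_{k\ne i}\lambda_ka_{kj}}{\mu_j}\big)$. *)

(* Defs.v *)
(* R : realType, servers 'I_m, players 'I_n. *)
From HB Require Import structures.
From mathcomp Require Import all_boot all_order all_algebra.
From mathcomp Require Import all_classical all_reals all_analysis.
Set Implicit Arguments. Unset Strict Implicit. Unset Printing Implicit Defensive.
Import Order.TTheory GRing.Theory Num.Theory.
Import numFieldNormedType.Exports.
Local Open Scope ring_scope.

Section LB.
Variables (R : realType) (m : nat).

Definition in_simplex (a : 'I_m -> R) : Prop :=
  (forall j, 0 <= a j) /\ \sum_(j < m) a j = 1.

(* cost D_i(a,s) of a player with job length lam, rates mu, state s *)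
Definition cost (mu : 'I_m -> R) (lam : R) (a s : 'I_m -> R) : R :=
  \sum_(j < m) lam * a j * (lam * a j / (2 * mu j) + s j / mu j).

Definition best_response (mu : 'I_m -> R) (lam : R) (s a : 'I_m -> R) : Prop :=
  in_simplex a /\ forall b, in_simplex b -> cost mu lam a s <= cost mu lam b s.

Definition next_state (mu : 'I_m -> R) (lam : R) (a s : 'I_m -> R) : 'I_m -> R :=
  fun j => Num.max 0 (s j + lam * a j - mu j).

Definition static_cost (n : nat) (mu : 'I_m -> R) (lam : 'I_n -> R)
  (A : 'I_n -> 'I_m -> R) (i : 'I_n) (ai : 'I_m -> R) : R :=
  \sum_(j < m) lam i * ai j *
     (lam i * ai j / (2 * mu j) + (\sum_(k < n | k != i) lam k * A k j) / mu j).

Definition is_pure_NE (n : nat) (mu : 'I_m -> R) (lam : 'I_n -> R)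
  (A : 'I_n -> 'I_m -> R) : Prop :=
  (forall i, in_simplex (A i)) /\
  forall i b, in_simplex b -> static_cost mu lam A i (A i) <= static_cost mu lam A i b.

End LB.

(* Main.v *)
Require Import Defs.
From HB Require Import structures.
From mathcomp Require Import all_boot all_order all_algebra.
From mathcomp Require Import all_classical all_reals all_analysis.
From mathcomp Require Import ring lra.
Import Order.TTheory GRing.Theory Num.Theory.
Import numFieldNormedType.Exports.
Local Open Scope classical_set_scope.
Local Open Scope ring_scope.

Section Aux.
Variable R : realType.

Lemma sum_ind m (k : 'I_m) (f : 'I_m -> R) :
  \sum_(l < m) (l == k)%:R * f l = f k.
Proof.
rewrite (bigD1 k) //= eqxx mul1r big1 ?addr0 // => l /negPf ->; by rewrite mul0r.
Qed.

Lemma bigmax_ge m (F : 'I_m -> R) j : F j <= \big[Num.max/0]_(i < m) F i.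
Proof. by rewrite (bigD1 j) //= le_max lexx. Qed.

Lemma bigmax_ge0 m (F : 'I_m -> R) : 0 <= \big[Num.max/0]_(i < m) F i.
Proof. elim/big_rec: _ => // i x _ hx; by rewrite le_max hx orbT. Qed.

Lemma small_quad (A B e0 : R) : 0 < e0 -> 0 <= B ->
  (forall e, 0 < e -> e <= e0 -> 0 <= A * e + B * e ^+ 2) -> 0 <= A.
Proof.
move=> he0 hB H; rewrite leNgt; apply/negP => hA.
pose e := Num.min e0 (- A / (B + 1)).
have he : 0 < e by rewrite lt_min he0 /= divr_gt0 // ?oppr_gt0 //; lra.
have hee0 : e <= e0 by rewrite ge_min lexx.
have he2 : e <= - A / (B + 1) by rewrite ge_min lexx orbT.
have hBe : B * e < - A.
  have : (B + 1) * e <= - A by rewrite mulrC -ler_pdivlMr //; lra.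
  nra.
have := H e he hee0. nra.
Qed.

Lemma kkt m (mu : 'I_m -> R) lam s a : (forall j, 0 < mu j) -> 0 < lam ->
  best_response mu lam s a -> forall j k, 0 < a j ->
  (s j + lam * a j) / mu j <= (s k + lam * a k) / mu k.
Proof.
move=> hmu hlam [[ha0 ha1] hopt] j k haj.
have [->|njk] := eqVneq j k; first by [].
pose d := fun l : 'I_m => (l == k)%:R - (l == j)%:R : R.
pose x := fun l => (s l + lam * a l) / mu l.
pose Q := \sum_(l < m) lam ^+ 2 * d l ^+ 2 / (2 * mu l).
have hQ : 0 <= Q.
  apply: sumr_ge0 => l _; apply: divr_ge0; first by rewrite mulr_ge0 ?sqr_ge0.
  by rewrite mulr_ge0 // ltW.
suff : 0 <= lam * (x k - x j) by rewrite pmulr_rge0 // subr_ge0.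
apply: (@small_quad _ _ (a j) haj hQ) => e he hea.
pose b := fun l => a l + e * d l.
have hb : in_simplex b.
  split.
    move=> l; rewrite /b /d; have [->|nlk] := eqVneq l k.
      rewrite (eq_sym k j) (negPf njk) /= subr0 mulr1; have := ha0 k; lra.
    have [->|nlj] := eqVneq l j; first by rewrite /= sub0r mulrN1; lra.
    by rewrite /= subrr mulr0 addr0.
  rewrite /b big_split /= ha1 -mulr_sumr /d sumrB.
  have h1 : forall i : 'I_m, \sum_(l < m) ((l == i)%:R : R) = 1.
    by move=> i; rewrite -[RHS](@sum_ind _ i (fun=> 1)); apply: eq_bigr => l _; rewrite mulr1.
  by rewrite !h1 subrr mulr0 addr0.
have := hopt b hb; rewrite /cost -subr_ge0 -sumrB.
have -> : \sum_(i < m) (lam * b i * (lam * b i / (2 * mu i) + s i / mu i) -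
      lam * a i * (lam * a i / (2 * mu i) + s i / mu i)) =
    \sum_(i < m) (e * (lam * (d i * x i)) + e ^+ 2 * (lam ^+ 2 * d i ^+ 2 / (2 * mu i))).
  apply: eq_bigr => i _; rewrite /b /x; have := hmu i; move=> hm.
  field; by rewrite gt_eqF.
rewrite big_split /= -!mulr_sumr -/Q /d.
have -> : \sum_(i < m) ((i == k)%:R - (i == j)%:R) * x i = x k - x j.
  under eq_bigr do rewrite mulrBl.
  by rewrite sumrB !sum_ind.
by rewrite mulrC [Q * _]mulrC.
Qed.

Lemma br_zero m (mu : 'I_m -> R) lam s a : (forall j, 0 < mu j) -> 0 < lam ->
  (forall j, s j = 0) -> best_response mu lam s a ->
  forall j, a j = mu j / \sum_(k < m) mu k.
Proof.
move=> hmu hlam hs hbr.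
have K := @kkt _ _ _ _ _ hmu hlam hbr.
case: hbr => [[ha0 ha1] _].
have [j0 hj0] : exists j0, 0 < a j0.
  case: (boolP [exists j, 0 < a j]) => [/existsP [j hj]|/existsPn hn]; first by exists j.
  have : \sum_(j < m) a j = 0.
    apply: big1 => j _; apply/eqP; rewrite eq_le ha0 andbT.
    by have := hn j; rewrite -leNgt.
  by rewrite ha1 => /eqP; rewrite oner_eq0.
pose c := lam * a j0 / mu j0.
have hc : 0 < c by rewrite /c divr_gt0 ?mulr_gt0.
have hx : forall k, lam * a k = c * mu k.
  move=> k; have := K j0 k hj0; rewrite !hs !add0r -/c => h1.
  have hak : 0 < a k.
    have := hmu k => hk. rewrite ltNge; apply/negP => hle.
    have ak0 : a k = 0 by apply/eqP; rewrite eq_le hle ha0.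
    move: h1; rewrite ak0 mulr0 mul0r; lra.
  have := K k j0 hak; rewrite !hs !add0r -/c => h2.
  have e : lam * a k / mu k = c by apply/eqP; rewrite eq_le h1 h2.
  rewrite -e mulrVK //; exact: unitf_gt0.
have hM : lam = c * \sum_(k < m) mu k.
  rewrite mulr_sumr -(mulr1 lam) -ha1 mulr_sumr; apply: eq_bigr => k _; exact: hx.
move=> j; have := hx j; rewrite hM => h.
have hsum : 0 < \sum_(k < m) mu k.
  have : 0 < c * \sum_(k < m) mu k by rewrite -hM.
  by rewrite pmulr_rgt0.
have hcM : c * \sum_(k < m) mu k != 0 by rewrite gt_eqF // mulr_gt0.
rewrite -(mulKf hcM (a j)) h; field; rewrite ?gt_eqF //.
Qed.

Lemma step m (mu : 'I_m -> R) lam s a H : (forall j, 0 < mu j) -> 0 < lam ->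
  (forall j, s j <= H * mu j) -> best_response mu lam s a ->
  forall j, next_state mu lam a s j <= Num.max 0 (H + lam / \sum_(k < m) mu k - 1) * mu j.
Proof.
move=> hmu hlam hsH hbr j.
have K := @kkt _ _ _ _ _ hmu hlam hbr.
case: hbr => [[ha0 ha1] _].
set M := \sum_(k < m) mu k.
have hM : 0 < M by rewrite /M (bigD1 j) //= ltr_pwDl ?hmu // sumr_ge0 // => k _; exact: ltW.
have hmj := hmu j.
have hxj : (s j + lam * a j) / mu j <= H + lam / M.
  rewrite leNgt; apply/negP => hgt.
  have haj : 0 < a j.
    rewrite lt_def ha0 andbT; apply/negP => /eqP aj0.
    move: hgt; rewrite aj0 mulr0 addr0 ltr_pdivlMr //.
    have := hsH j; have : 0 <= lam / M by rewrite divr_ge0 // ltW.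
    nra.
  have h1 : \sum_(k < m) (s k + lam * a k) = \sum_(k < m) s k + lam.
    by rewrite big_split /= -mulr_sumr ha1 mulr1.
  have h2 : \sum_(k < m) s k <= H * M.
    by rewrite /M mulr_sumr; apply: ler_sum => k _; exact: hsH.
  have h3 : \sum_(k < m) ((H + lam / M) * mu k) < \sum_(k < m) (s k + lam * a k).
    rewrite (bigD1 j) //= [X in _ < X](bigD1 j) //=.
    apply: ltr_leD.
      by rewrite -ltr_pdivlMr.
    apply: ler_sum => k _.
    have := K j k haj => hk.
    have hmk := hmu k.
    rewrite -ler_pdivlMr //; apply: le_trans hk; exact: ltW.
  move: h3; rewrite -mulr_sumr -/M h1 mulrDl mulrVK ?unitf_gt0 //.
  lra.
rewrite /next_state ge_max mulr_ge0 ?(ltW hmj) ?le_max ?lexx //=.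
apply: (@le_trans _ _ ((H + lam / M - 1) * mu j)); last first.
  by apply: ler_wpM2r; [exact: ltW|rewrite le_max lexx orbT].
move: hxj; rewrite ler_pdivrMr //; lra.
Qed.

Lemma max0_mono (x y : R) : x <= y -> Num.max 0 x <= Num.max 0 y.
Proof. by move=> h; rewrite ge_max !le_max lexx h !orbT. Qed.

Lemma max0_shift (u c : R) : c <= 0 ->
  Num.max 0 (Num.max 0 u + c) <= Num.max 0 (u + c).
Proof.
move=> hc; have [hu|hu] := leP 0 u.
  by [].
by rewrite add0r ge_max !le_max lexx /= hc.
Qed.
End Aux.

Theorem theorem4 (R : realType) :
  exists C : R, 0 < C /\
  forall (m n : nat) (mu : 'I_m -> R) (lam : 'I_n -> R) (s0 : 'I_m -> R)
    (p : nat -> 'I_n) (a s : nat -> 'I_m -> R),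
    (forall j, 0 < mu j) ->
    (forall i, 0 < lam i) ->
    (forall j, 0 <= s0 j) ->
    \big[Num.max/0]_(i < n) lam i < \sum_(j < m) mu j ->
    s 0%N = s0 ->
    (forall t, best_response mu (lam (p t)) (s t) (a t)) ->
    (forall t, s t.+1 = next_state mu (lam (p t)) (a t) (s t)) ->
    (* finite-time load balancing, with the O(...) bound *)
    (forall t : nat,
       C * ((\big[Num.max/0]_(j < m) (Num.ceil (s0 j / mu j))%:~R) *
            ((\sum_(j < m) mu j + \sum_(j < m) s0 j) /
             (\sum_(j < m) mu j - \big[Num.max/0]_(i < n) lam i)))
       <= t%:R ->
       forall j, s t j = 0) /\
    (* the limit profile is a pure NE of the static game with zero loads *)
    is_pure_NE mu lam (fun _ j => mu j / \sum_(k < m) mu k) /\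
    (* the strategies played converge to it *)
    (forall j, (fun t => a t j) @ \oo --> mu j / \sum_(k < m) mu k) /\
    (forall (i : 'I_n) (b : nat -> 'I_m -> R),
       (forall t, best_response mu (lam i) (s t) (b t)) ->
       forall j, (fun t => b t j) @ \oo --> mu j / \sum_(k < m) mu k).
Proof.
exists 1; split; first exact: ltr01.
move=> m n mu lam s0 p a s hmu hlam hs0 hL s00 hbr hstep.
set M := \sum_(j < m) mu j in hL *.
set L := \big[Num.max/0]_(i < n) lam i in hL *.
set K := \big[Num.max/0]_(j < m) (Num.ceil (s0 j / mu j))%:~R.
set S := \sum_(j < m) s0 j.
have L0 : 0 <= L by apply: bigmax_ge0.
have hM : 0 < M by lra.
have hlamL : forall i, lam i <= L := fun i => @bigmax_ge _ _ lam i.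
have hK : forall j, s0 j <= K * mu j.
  move=> j; rewrite -ler_pdivrMr //; apply: le_trans (ceil_ge _) _.
  exact: (@bigmax_ge _ _ (fun j => (Num.ceil (s0 j / mu j))%:~R : R) j).
have K0 : 0 <= K by apply: bigmax_ge0.
have S0 : 0 <= S by apply: sumr_ge0.
pose d : R := 1 - L / M.
have hdM : d * M = M - L by rewrite /d mulrBl mul1r mulrVK ?unitf_gt0.
have hd : 0 < d.
  have : 0 < d * M by rewrite hdM; lra.
  by rewrite pmulr_lgt0.
have hsnn : forall t j, 0 <= s t j.
  elim=> [|t IH] j; first by rewrite s00.
  by rewrite hstep /next_state le_max lexx.
have bound : forall t j, s t j <= Num.max 0 (K - t%:R * d) * mu j.
  elim=> [|t IH] j.
    rewrite mul0r subr0 s00; apply: le_trans (hK j) _.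
    by apply: ler_wpM2r; [exact: ltW|rewrite le_max lexx orbT].
  rewrite hstep; apply: le_trans (@step _ _ _ _ _ _ _ hmu (hlam (p t)) IH (hbr t) j) _.
  apply: ler_wpM2r; first exact: ltW.
  have hl : lam (p t) / M <= L / M by apply: ler_wpM2r; [rewrite invr_ge0 ltW|exact: hlamL].
  have e1 : L / M = 1 - d by rewrite /d; ring.
  rewrite -/M -addn1 natrD.
  rewrite -addrA; apply: (le_trans (@max0_shift _ (K - t%:R * d) (lam (p t) / M - 1) _)); first lra.
  apply: max0_mono; lra.
have zero : forall t : nat, K <= t%:R * d -> forall j, s t j = 0.
  move=> t ht j; apply/eqP; rewrite eq_le hsnn andbT.
  apply: le_trans (bound t j) _.
  have -> : Num.max 0 (K - t%:R * d) = 0.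
    apply/eqP; rewrite eq_le ge_max le_max lexx /= andbT; lra.
  by rewrite mul0r.
have zero2 : forall t : nat,
   1 * (K * ((M + S) / (M - L))) <= t%:R -> forall j, s t j = 0.
  move=> t ht; apply: zero.
  have hML : 0 < M - L by lra.
  have hr : ((M + S) / (M - L)) * (M - L) = M + S by rewrite mulrVK ?unitf_gt0.
  set r := (M + S) / (M - L) in ht hr.
  rewrite mul1r in ht.
  have h1 : K * r * (M - L) <= t%:R * (M - L) by rewrite ler_wpM2r // ltW.
  have h2 : K * (M + S) <= t%:R * (M - L) by rewrite -hr mulrA.
  have h3 : K * M <= t%:R * (M - L) by nra.
  rewrite -hdM mulrA in h3.
  by rewrite -(ler_pM2r hM).
split; first exact: zero2.
set B := 1 * (K * ((M + S) / (M - L))).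
pose N := (Num.truncn B).+1.
have evz : forall t, (N <= t)%N -> forall j, s t j = 0.
  move=> t ht; apply: zero2; rewrite -/B.
  apply: ltW; apply: lt_le_trans (truncnS_gt B) _; by rewrite ler_nat.
have cv : forall (lf : nat -> R) (b : nat -> 'I_m -> R), (forall t, 0 < lf t) ->
    (forall t, best_response mu (lf t) (s t) (b t)) ->
    forall j, (fun t => b t j) @ \oo --> mu j / M.
  move=> lf b hlf hb j.
  apply: (@cvg_trans _ ((fun=> mu j / M) @ \oo)); last exact: cvg_cst.
  apply: near_eq_cvg; near=> t.
  apply/esym; apply: (@br_zero _ _ _ _ _ _ hmu (hlf t) _ (hb t) j) => k; apply: evz.
  by near: t; exists N.
split; last first.
  split; last by move=> i b hb; apply: (cv (fun=> lam i)).
  by move=> j; apply: (cv (fun t => lam (p t))).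
split.
  move=> i; split=> [j|]; first by rewrite divr_ge0 // ltW.
  by rewrite -mulr_suml divff // gt_eqF.
move=> i b [hb0 hb1].
rewrite /static_cost.
set C := (\sum_(k < n | k != i) lam k) / M.
have hc : forall j, (\sum_(k < n | k != i) lam k * (mu j / M)) / mu j = C.
  move=> j; rewrite -mulr_suml /C; have := hmu j => hj; field.
  by rewrite !gt_eqF.
under eq_bigr do rewrite hc.
under [X in _ <= X]eq_bigr do rewrite hc.
rewrite -subr_ge0 -sumrB.
have -> : \sum_(j < m) (lam i * b j * (lam i * b j / (2 * mu j) + C) -
    lam i * (mu j / M) * (lam i * (mu j / M) / (2 * mu j) + C)) =
  \sum_(j < m) (lam i ^+ 2 * (b j - mu j / M) ^+ 2 / (2 * mu j) +
                (lam i ^+ 2 / M + lam i * C) * (b j - mu j / M)).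
  apply: eq_bigr => j _; have := hmu j => hj; field; by rewrite !gt_eqF.
rewrite big_split /= -mulr_sumr sumrB hb1 -mulr_suml divff ?gt_eqF // subrr mulr0 addr0.
apply: sumr_ge0 => j _; apply: divr_ge0; first by rewrite mulr_ge0 ?sqr_ge0.
by rewrite mulr_ge0 // ltW.
Unshelve. all: end_near.
Qed.
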